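(* For every finite multiset $\Gamma$ and formulas $\varphi,\chi$: if both $\Gamma\Rightarrow\varphi$ and $\varphi,\Gamma\Rightarrow\chi$ are provable in $\mathsf{G4iSLt}$, then $\Gamma\Rightarrow\chi$ is provable in $\mathsf{G4iSLt}$.
   Context: Formulas are built by the grammar $\varphi ::= p \mid \bot \mid \varphi\land\varphi \mid \varphi\lor\varphi \mid \varphi\to\varphi \mid \Box\varphi$, with $p$ ranging over a countably infinite set of propositional variables. For a multiset $\Gamma$, $\Box\Gamma=\{\Box\psi:\psi\in\Gamma\}$; a boxed formula is one of the form $\Box\psi$. A sequent is $\Gamma\Rightarrow\chi$ with $\Gamma$ a finite multiset of formulas and $\chi$ a formula. The sequent calculus $\mathsf{G4iSLt}$ has the following rules, where $p$ is a propositional variable and $\Phi$ always denotes a multiset containing no boxed formula: (⊥L) $\bot,\Gamma\Rightarrow\chi$ (no premise); (IdP) $\Gamma,p\Rightarrow p$ (no premise); (∧L) from $\Gamma,\varphi,\psi\Rightarrow\chi$ infer $\Gamma,\varphi\land\psi\Rightarrow\chi$; (∧R) from $\Gamma\Rightarrow\varphi$ and $\Gamma\Rightarrow\psi$ infer $\Gamma\Rightarrow\varphi\land\psi$; (∨L) from $\Gamma,\varphi\Rightarrow\chi$ and $\Gamma,\psi\Rightarrow\chi$ infer $\Gamma,\varphi\lor\psi\Rightarrow\chi$; (∨R$_i$), $i\in\{1,2\}$: from $\Gamma\Rightarrow\varphi_i$ infer $\Gamma\Rightarrow\varphi_1\lor\varphi_2$; (p→L) from $\Gamma,p,\varphi\Rightarrow\chi$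 infer $\Gamma,p,p\to\varphi\Rightarrow\chi$; (→R) from $\Gamma,\varphi\Rightarrow\psi$ infer $\Gamma\Rightarrow\varphi\to\psi$; (□→L) from $\Phi,\Gamma,\psi,\Box\varphi\Rightarrow\varphi$ and $\Phi,\Box\Gamma,\psi\Rightarrow\chi$ infer $\Phi,\Box\Gamma,\Box\varphi\to\psi\Rightarrow\chi$; (SLtR) from $\Phi,\Gamma,\Box\varphi\Rightarrow\varphi$ infer $\Phi,\Box\Gamma\Rightarrow\Box\varphi$; (∧→L) from $\Gamma,\varphi\to(\psi\to\chi)\Rightarrow\delta$ infer $\Gamma,(\varphi\land\psi)\to\chi\Rightarrow\delta$; (∨→L) from $\Gamma,\varphi\to\chi,\psi\to\chi\Rightarrow\delta$ infer $\Gamma,(\varphi\lor\psi)\to\chi\Rightarrow\delta$; (→→L) from $\Gamma,\psi\to\chi\Rightarrow\varphi\to\psi$ and $\Gamma,\chi\Rightarrow\delta$ infer $\Gamma,(\varphi\to\psi)\to\chi\Rightarrow\delta$. A proof of a sequent $S$ is a finite tree of sequents with root $S$ in which each interior node together with its children forms an instance of a rule (conclusion, premises) and each leaf is the conclusion of a premise-free rule; $S$ is provable if it has a proof. *)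

(* Defs.v *)
From Stdlib Require Import List Permutation.
Import ListNotations.

Inductive form : Type :=
| Var : nat -> form
| Bot : form
| And : form -> form -> form
| Or  : form -> form -> form
| Imp : form -> form -> form
| Box : form -> form.

Definition is_boxed (f : form) : Prop :=
  match f with Box _ => True | _ => False end.

Definition no_boxed (Phi : list form) : Prop := Forall (fun f => ~ is_boxed f) Phi.

(* Multisets are represented by lists; the context of each rule's conclusion
   is matched up to permutation, so provability depends only on the multiset. *)
Inductive G4iSLt : list form -> form -> Prop :=
| BotL (Gamma Gamma' : list form) (chi : form) :
    Permutation Gamma' (Bot :: Gamma) -> G4iSLt Gamma' chi
| IdP (Gamma Gamma' : list form) (p : nat) :
    Permutation Gamma' (Var p :: Gamma) -> G4iSLt Gamma' (Var p)
| AndL (Gamma Gamma' : list form) (phi psi chi : form) :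
    Permutation Gamma' (And phi psi :: Gamma) ->
    G4iSLt (phi :: psi :: Gamma) chi -> G4iSLt Gamma' chi
| AndR (Gamma : list form) (phi psi : form) :
    G4iSLt Gamma phi -> G4iSLt Gamma psi -> G4iSLt Gamma (And phi psi)
| OrL (Gamma Gamma' : list form) (phi psi chi : form) :
    Permutation Gamma' (Or phi psi :: Gamma) ->
    G4iSLt (phi :: Gamma) chi -> G4iSLt (psi :: Gamma) chi -> G4iSLt Gamma' chi
| OrR1 (Gamma : list form) (phi psi : form) :
    G4iSLt Gamma phi -> G4iSLt Gamma (Or phi psi)
| OrR2 (Gamma : list form) (phi psi : form) :
    G4iSLt Gamma psi -> G4iSLt Gamma (Or phi psi)
| PImpL (Gamma Gamma' : list form) (p : nat) (phi chi : form) :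
    Permutation Gamma' (Var p :: Imp (Var p) phi :: Gamma) ->
    G4iSLt (Var p :: phi :: Gamma) chi -> G4iSLt Gamma' chi
| ImpR (Gamma : list form) (phi psi : form) :
    G4iSLt (phi :: Gamma) psi -> G4iSLt Gamma (Imp phi psi)
| BoxImpL (Phi Gamma Gamma' : list form) (phi psi chi : form) :
    no_boxed Phi ->
    Permutation Gamma' (Imp (Box phi) psi :: Phi ++ map Box Gamma) ->
    G4iSLt (psi :: Box phi :: Phi ++ Gamma) phi ->
    G4iSLt (psi :: Phi ++ map Box Gamma) chi ->
    G4iSLt Gamma' chi
| SLtR (Phi Gamma Gamma' : list form) (phi : form) :
    no_boxed Phi ->
    Permutation Gamma' (Phi ++ map Box Gamma) ->
    G4iSLt (Box phi :: Phi ++ Gamma) phi ->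
    G4iSLt Gamma' (Box phi)
| AndImpL (Gamma Gamma' : list form) (phi psi chi delta : form) :
    Permutation Gamma' (Imp (And phi psi) chi :: Gamma) ->
    G4iSLt (Imp phi (Imp psi chi) :: Gamma) delta -> G4iSLt Gamma' delta
| OrImpL (Gamma Gamma' : list form) (phi psi chi delta : form) :
    Permutation Gamma' (Imp (Or phi psi) chi :: Gamma) ->
    G4iSLt (Imp phi chi :: Imp psi chi :: Gamma) delta -> G4iSLt Gamma' delta
| ImpImpL (Gamma Gamma' : list form) (phi psi chi delta : form) :
    Permutation Gamma' (Imp (Imp phi psi) chi :: Gamma) ->
    G4iSLt (Imp psi chi :: Gamma) (Imp phi psi) ->
    G4iSLt (chi :: Gamma) delta -> G4iSLt Gamma' delta.

(* Main.v *)
Require Import Defs.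
From Stdlib Require Import List Permutation.
From Stdlib Require Import Classical Lia Arith Wf_nat.
Import ListNotations.

(* Kripke semantics on finite trees: tle = reflexive-transitive closure of edges,
   Rel = paths containing a "true" (modal) edge. Box = all Rel-successors. *)
Inductive tree : Type := Node : list nat -> list (bool * tree) -> tree.
Definition lab (t : tree) := match t with Node l _ => l end.
Definition kids (t : tree) := match t with Node _ k => k end.

Inductive wf : tree -> Prop :=
| wf_i : forall t, (forall b c, In (b,c) (kids t) -> wf c) ->
   (forall b c p, In (b,c) (kids t) -> In p (lab t) -> In p (lab c)) -> wf t.

Inductive tle : tree -> tree -> Prop :=
| tle_refl : forall t, tle t t
| le_step : forall t b c u, In (b,c) (kids t) -> tle c u -> tle t u.

Inductive Rel : tree -> tree -> Prop :=
| R_edge : forall t c u, In (true,c) (kids t) -> tle c u -> Rel t u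
| R_deep : forall t b c u, In (b,c) (kids t) -> Rel c u -> Rel t u.

Fixpoint frc (t : tree) (A : form) : Prop :=
  match A with
  | Var p => In p (lab t)
  | Bot => False
  | And a b => frc t a /\ frc t b
  | Or a b => frc t a \/ frc t b
  | Imp a b => forall u, tle t u -> frc u a -> frc u b
  | Box a => forall u, Rel t u -> frc u a
  end.
Definition forces t (G : list form) := forall A, In A G -> frc t A.

Lemma tle_trans : forall t u v, tle t u -> tle u v -> tle t v.
Proof. intros t u v H; induction H; intros; [assumption| eapply le_step; eauto]. Qed.
Lemma tle_Rel : forall t u v, tle t u -> Rel u v -> Rel t v.
Proof. intros t u v H; induction H; intros; [assumption| eapply R_deep; eauto]. Qed.
Lemma Rel_tle : forall t u, Rel t u -> tle t u.
Proof. intros t u H; induction H; eapply le_step; eauto. Qed.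
Lemma wf_tle : forall t u, tle t u -> wf t -> wf u.
Proof. intros t u H; induction H; intros Hw; auto. destruct Hw as [t Hk Hl]. apply IHtle. eapply Hk; eauto. Qed.
Lemma lab_tle : forall t u p, tle t u -> wf t -> In p (lab t) -> In p (lab u).
Proof. intros t u p H; induction H; intros Hw Hp; auto. destruct Hw as [t Hk Hl]. apply IHtle; eauto. Qed.

Lemma persist : forall A t u, wf t -> tle t u -> frc t A -> frc u A.
Proof.
  induction A; simpl; intros t u Hw Hle H.
  - eapply lab_tle; eauto.
  - exact H.
  - destruct H; split; eauto.
  - destruct H; [left|right]; eauto.
  - intros v Hv; apply H; eapply tle_trans; eauto.
  - intros v Hv; apply H; eapply tle_Rel; eauto.
Qed.

Lemma acc_rel : forall t, wf t -> forall u, tle t u -> Acc (fun x y => Rel y x) u.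
Proof.
  intros t Hw; induction Hw as [t Hk IHk Hl].
  intros u Hu. inversion Hu; subst.
  - constructor. intros v Hv. inversion Hv; subst.
    + eapply IHk; eauto.
    + eapply IHk; eauto. apply Rel_tle; auto.
  - eapply IHk; eauto.
Qed.

Lemma forces_perm : forall t G G', Permutation G G' -> forces t G -> forces t G'.
Proof. unfold forces; intros t G G' Hp H A HA; apply H; eapply Permutation_in; [apply Permutation_sym; eauto| auto]. Qed.
Lemma forces_cons : forall t A G, forces t (A::G) <-> frc t A /\ forces t G.
Proof. unfold forces; split.
  - intros H; split; [apply H; left; auto| intros; apply H; right; auto].
  - intros [H1 H2] B [<-|HB]; auto. Qed.
Lemma forces_app : forall t G H, forces t (G ++ H) <-> forces t G /\ forces t H.
Proof. unfold forces; split.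
  - intros K; split; intros; apply K; apply in_or_app; auto.
  - intros [K1 K2] B HB; apply in_app_or in HB; destruct HB; auto. Qed.
Lemma forces_tle : forall t u G, wf t -> tle t u -> forces t G -> forces u G.
Proof. unfold forces; intros; eapply persist; eauto. Qed.

Lemma in_box : forall G x, In (Box x) (map Box G) <-> In x G.
Proof. intros G x; rewrite in_map_iff; split.
  - intros [y [Hy Hin]]; injection Hy; intros ->; auto.
  - intros; exists x; auto. Qed.

Lemma sound : forall G d, G4iSLt G d -> forall t, wf t -> forces t G -> frc t d.
Proof.
  intros G d H; induction H as [G G' chi Hp | G G' p Hp | G G' a b chi Hp D IH
   | G a b D1 IH1 D2 IH2 | G G' a b chi Hp D1 IH1 D2 IH2 | G a b D IH | G a b D IH
   | G G' p a chi Hp D IH | G a b D IH | Phi G G' a b chi Hnb Hp D1 IH1 D2 IH2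
   | Phi G G' a Hnb Hp D IH | G G' a b c d Hp D IH | G G' a b c d Hp D IH
   | G G' a b c d Hp D1 IH1 D2 IH2]; intros t Hw HG;
  try (apply (forces_perm _ _ _ Hp) in HG; apply forces_cons in HG; destruct HG as [HA HG]).
  - destruct HA.
  - exact HA.
  - destruct HA as [Ha Hb]. apply IH; auto. apply forces_cons; split; auto. apply forces_cons; split; auto.
  - split; auto.
  - destruct HA as [Ha|Hb]; [apply IH1|apply IH2]; auto; apply forces_cons; auto.
  - left; auto.
  - right; auto.
  - apply forces_cons in HG; destruct HG as [Hi HG]. apply IH; auto.
    apply forces_cons; split; auto. apply forces_cons; split; auto. apply Hi; auto. apply tle_refl.
  - simpl; intros u Hu Ha. apply IH; [eapply wf_tle; eauto | apply forces_cons; split; auto; eapply forces_tle; eauto].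
  - apply forces_app in HG; destruct HG as [HPhi HB].
    assert (HBa : frc t (Box a)).
    { simpl. intros u Hu. assert (Hacc := acc_rel t Hw u (Rel_tle _ _ Hu)).
      revert Hu; induction Hacc as [u _ IHacc]; intros Hu.
      assert (Hbu : frc u (Box a)).
      { simpl; intros v Hv. apply IHacc; auto. eapply tle_Rel; [apply Rel_tle; exact Hu| exact Hv]. }
      apply IH1; [eapply wf_tle; eauto; apply Rel_tle; eauto|].
      apply forces_cons; split; [apply HA; auto; apply Rel_tle; auto|].
      apply forces_cons; split; auto. apply forces_app; split.
      - eapply forces_tle; eauto. apply Rel_tle; auto.
      - intros x Hx. apply (HB (Box x)); [apply in_box; auto| auto]. }
    apply IH2; auto. apply forces_cons; split; [apply HA; auto; apply tle_refl|]. apply forces_app; auto.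
  - apply (forces_perm _ _ _ Hp) in HG. apply forces_app in HG; destruct HG as [HPhi HB].
    simpl. intros u Hu. assert (Hacc := acc_rel t Hw u (Rel_tle _ _ Hu)).
    revert Hu; induction Hacc as [u _ IHacc]; intros Hu.
    assert (Hbu : frc u (Box a)).
    { simpl; intros v Hv. apply IHacc; auto. eapply tle_Rel; [apply Rel_tle; exact Hu| exact Hv]. }
    apply IH; [eapply wf_tle; eauto; apply Rel_tle; eauto|].
    apply forces_cons; split; auto. apply forces_app; split.
    + eapply forces_tle; eauto. apply Rel_tle; auto.
    + intros x Hx. apply (HB (Box x)); [apply in_box; auto| auto].
  - apply IH; auto. apply forces_cons; split; auto.
    simpl; intros u Hu Ha v Hv Hb. apply HA; [eapply tle_trans; eauto| split; auto].
    apply (persist a u v); [eapply wf_tle; eauto| auto| auto].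
  - apply IH; auto. apply forces_cons; split; [|apply forces_cons; split; auto];
    simpl; intros u Hu Ha; apply HA; auto.
  - assert (Hbc : frc t (Imp b c)).
    { simpl; intros u Hu Hb. apply HA; auto. simpl; intros v Hv _.
      apply (persist b u v); [eapply wf_tle; eauto| auto| auto]. }
    apply IH2; auto. apply forces_cons; split; auto.
    apply HA; [apply tle_refl|]. apply IH1; auto. apply forces_cons; auto.
Qed.

Fixpoint wt (A:form) : nat := match A with
  | Var _ => 1 | Bot => 1 | And a b => wt a + wt b + 2 | Or a b => wt a + wt b + 1
  | Imp a b => wt a + wt b + 1 | Box a => wt a + 1 end.
Fixpoint sw (G : list form) : nat := match G with [] => 0 | A :: G => 4 ^ wt A + sw G end.
Definition mu G d := sw G + 4 ^ (wt d + 1).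

Lemma sw_app : forall G H, sw (G ++ H) = sw G + sw H.
Proof. induction G; simpl; intros; [auto| rewrite IHG; lia]. Qed.
Lemma sw_perm : forall G H, Permutation G H -> sw G = sw H.
Proof. intros G H P; induction P; simpl; lia. Qed.
Lemma sw_mapBox : forall G, sw (map Box G) = 4 * sw G.
Proof. induction G; simpl; auto. rewrite IHG, Nat.pow_add_r, Nat.pow_1_r; lia. Qed.
Lemma p4 : forall A, 4 <= 4 ^ wt A.
Proof. intros A. change 4 with (4 ^ 1) at 1. apply Nat.pow_le_mono_r; [lia|]. destruct A; simpl; lia. Qed.

Lemma pow_step : forall e E, e < E -> 4 ^ e * 4 <= 4 ^ E.
Proof. intros e E H. replace (4^e*4) with (4^(S e)) by (rewrite Nat.pow_succ_r'; lia).
  apply Nat.pow_le_mono_r; lia. Qed.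
Lemma pow_pos4 : forall e, 1 <= 4 ^ e.
Proof. induction e; simpl; lia. Qed.

Ltac meas := unfold mu; cbn [sw wt]; rewrite ?sw_app, ?sw_mapBox; cbn [sw wt];
  repeat (match goal with |- context[4 ^ ?e1] => match goal with |- context[4 ^ ?e2] =>
     lazymatch goal with
     | _ : 4 ^ e1 * 4 <= 4 ^ e2 |- _ => fail
     | _ => let H := fresh in assert (H : 4 ^ e1 * 4 <= 4 ^ e2) by (apply pow_step; lia) end end end);
  repeat (match goal with |- context[4 ^ ?e] => lazymatch goal with
     | _ : 1 <= 4 ^ e |- _ => fail | _ => pose proof (pow_pos4 e) end end);
  lia.

Definition atoms (G : list form) : list nat :=
  flat_map (fun A => match A with Var p => [p] | _ => [] end) G.
Lemma in_atoms : forall G p, In p (atoms G) <-> In (Var p) G.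
Proof. intros G p; unfold atoms; rewrite in_flat_map; split.
  - intros [A [HA Hp]]; destruct A; simpl in Hp; try tauto; destruct Hp as [->|[]]; auto.
  - intros H; exists (Var p); simpl; auto. Qed.

Definition good (G : list form) (k : bool * tree) : Prop :=
  wf (snd k) /\ forces (snd k) G /\ (fst k = true -> forall a, In (Box a) G -> frc (snd k) a).

Lemma decomp : forall L, exists Phi G0, no_boxed Phi /\ Permutation L (Phi ++ map Box G0).
Proof.
  induction L as [|A L [Phi [G0 [Hn Hp]]]].
  - exists [], []; split; [constructor|simpl; constructor].
  - destruct A as [p| |a b|a b|a b|a];
    try (match goal with |- exists _ _, _ /\ Permutation (?A :: _) _ => exists (A :: Phi), G0 end;
      split; [constructor; [simpl; tauto|auto]| simpl; constructor; auto]; fail).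
    exists Phi, (a :: G0). split; auto. simpl. eapply Permutation_trans; [apply perm_skip; exact Hp|].
    apply Permutation_middle.
Qed.

Lemma nb_box : forall Phi G0 a, no_boxed Phi -> In (Box a) (Phi ++ map Box G0) -> In a G0.
Proof. intros Phi G0 a Hn H. apply in_app_or in H; destruct H as [H|H].
  - unfold no_boxed in Hn; rewrite Forall_forall in Hn; destruct (Hn _ H); simpl; auto.
  - apply in_box; auto. Qed.

Lemma box_child : forall Phi G0 m, no_boxed Phi -> wf m -> forces m Phi -> forces m G0 ->
  forces m (Phi ++ map Box G0) /\ (forall a, In (Box a) (Phi ++ map Box G0) -> frc m a).
Proof.
  intros Phi G0 m Hn Hw H1 H2; split.
  - apply forces_app; split; auto. intros A HA. apply in_map_iff in HA. destruct HA as [x [<- Hx]].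
    simpl; intros u Hu. eapply persist; [exact Hw| apply Rel_tle; exact Hu| auto].
  - intros a Ha; apply H2; eapply nb_box; eauto.
Qed.

Lemma choice_list : forall (G: list form) (Q : form -> bool*tree -> Prop) (L : list form),
  exists ks, (forall k, In k ks -> good G k) /\
   (forall A, In A L -> (exists k, good G k /\ Q A k) -> exists k, In k ks /\ Q A k).
Proof.
  intros G Q L; induction L as [|A L [ks [H1 H2]]].
  - exists []; split; [intros k []| intros A []].
  - destruct (classic (exists k, good G k /\ Q A k)) as [[k [Hk HQ]]|Hn].
    + exists (k :: ks); split.
      * intros k' [<-|Hk']; auto.
      * intros A' [<-|HA'] HE. exists k; simpl; auto.
        destruct (H2 A' HA' HE) as [k' [? ?]]; exists k'; simpl; auto.
    + exists ks; split; auto. intros A' [<-|HA'] HE; [contradiction|auto].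
Qed.

Definition CM G d := exists t, wf t /\ forces t G /\ ~ frc t d.
Definition IHn n := forall G d, mu G d < n -> ~ G4iSLt G d -> CM G d.

Definition irr (G : list form) (A : form) : Prop :=
  match A with
  | Var _ => True | Box _ => True
  | Bot => False | And _ _ => False | Or _ _ => False
  | Imp Bot _ => True
  | Imp (Var p) _ => ~ In (Var p) G
  | Imp (And _ _) _ => False | Imp (Or _ _) _ => False
  | Imp (Imp a1 a2) b => exists rest, Permutation G (Imp (Imp a1 a2) b :: rest) /\
       ~ G4iSLt (a1 :: Imp a2 b :: rest) a2
  | Imp (Box a1) b => exists Phi G0, no_boxed Phi /\
       Permutation G (Imp (Box a1) b :: Phi ++ map Box G0) /\
       ~ G4iSLt (b :: Box a1 :: Phi ++ G0) a1
  end.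

Lemma irr_case : forall n G d, IHn n -> mu G d = n -> ~ G4iSLt G d ->
  (forall A, In A G -> irr G A) -> CM G d.
Proof.
  intros n G d IH Hmu Hd Hirr.
  set (Q := fun A (k : bool * tree) => match A with
     | Imp (Imp a b) c => fst k = false /\ frc (snd k) a /\ ~ frc (snd k) b
     | Imp (Box a) b => fst k = true /\ ~ frc (snd k) a
     | _ => True end).
  destruct (choice_list G Q G) as [ks1 [Hg1 Hc1]].
  assert (Hright : forall B, mu G B <= mu G d -> ~ G4iSLt G B -> exists ks,
     (forall k, In k ks -> good G k) /\
     forall t, (forall p, In p (lab t) -> In (Var p) G) -> incl ks (kids t) -> ~ frc t B).
  { induction B as [p| |B1 IH1 B2 IH2|B1 IH1 B2 IH2|B1 _ B2 _|B1 _]; intros HB HnB.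
    - exists []; split; [intros k []|]. intros t Hl _ Hp. simpl in Hp. apply HnB.
      apply Hl in Hp. destruct (in_split _ _ Hp) as [l1 [l2 ->]].
      apply (IdP (l1 ++ l2)). apply Permutation_sym, Permutation_middle.
    - exists []; split; [intros k []|]. intros t _ _ [].
    - assert (HB1 : mu G B1 <= mu G d) by (eapply Nat.le_trans; [|exact HB]; meas).
      assert (HB2 : mu G B2 <= mu G d) by (eapply Nat.le_trans; [|exact HB]; meas).
      destruct (classic (G4iSLt G B1)) as [D1|N1].
      + assert (N2 : ~ G4iSLt G B2) by (intro D2; apply HnB; apply AndR; auto).
        destruct (IH2 HB2 N2) as [ks [Hg Hr]]. exists ks; split; auto.
        intros t Hl Hi [_ H2]. eapply Hr; eauto.
      + destruct (IH1 HB1 N1) as [ks [Hg Hr]]. exists ks; split; auto.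
        intros t Hl Hi [H1 _]. eapply Hr; eauto.
    - assert (HB1 : mu G B1 <= mu G d) by (eapply Nat.le_trans; [|exact HB]; meas).
      assert (HB2 : mu G B2 <= mu G d) by (eapply Nat.le_trans; [|exact HB]; meas).
      assert (N1 : ~ G4iSLt G B1) by (intro D; apply HnB; apply OrR1; auto).
      assert (N2 : ~ G4iSLt G B2) by (intro D; apply HnB; apply OrR2; auto).
      destruct (IH1 HB1 N1) as [ks1' [Hg1' Hr1]]. destruct (IH2 HB2 N2) as [ks2' [Hg2' Hr2]].
      exists (ks1' ++ ks2'); split.
      + intros k Hk; apply in_app_or in Hk; destruct Hk; auto.
      + intros t Hl Hi [H|H]; [eapply Hr1|eapply Hr2]; eauto;
        intros k Hk; apply Hi; apply in_or_app; auto.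
    - assert (N : ~ G4iSLt (B1 :: G) B2) by (intro D; apply HnB; apply ImpR; auto).
      destruct (IH (B1 :: G) B2) as [m [Hw [Hf Hn]]]; auto.
      { rewrite <- Hmu. eapply Nat.lt_le_trans; [|exact HB]. meas. }
      apply forces_cons in Hf; destruct Hf as [Hf1 Hf].
      exists [(false, m)]; split.
      + intros k [<-|[]]. split; [auto|split; [auto|discriminate]].
      + intros t Hl Hi H. apply Hn. apply (H m); auto.
        eapply le_step; [apply Hi; left; reflexivity| apply tle_refl].
    - destruct (decomp G) as [Phi [G0 [Hnb Hp]]].
      assert (N : ~ G4iSLt (Box B1 :: Phi ++ G0) B1) by
        (intro D; apply HnB; eapply SLtR; eauto).
      destruct (IH (Box B1 :: Phi ++ G0) B1) as [m [Hw [Hf Hn]]]; auto.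
      { rewrite <- Hmu. eapply Nat.lt_le_trans; [|exact HB]. unfold mu.
        rewrite (sw_perm _ _ Hp). meas. }
      apply forces_cons in Hf; destruct Hf as [_ Hf]. apply forces_app in Hf; destruct Hf as [Hf1 Hf2].
      destruct (box_child Phi G0 m Hnb Hw Hf1 Hf2) as [Hc1' Hc2'].
      exists [(true, m)]; split.
      + intros k [<-|[]]. split; [auto|split].
        * eapply forces_perm; [apply Permutation_sym; exact Hp| auto].
        * simpl; intros _ a Ha. apply Hc2'. eapply Permutation_in; eauto.
      + intros t Hl Hi H. apply Hn. apply (H m).
        eapply R_edge; [apply Hi; left; reflexivity| apply tle_refl]. }
  destruct (Hright d (Nat.le_refl _) Hd) as [ks2 [Hg2 Href]].
  set (t := Node (atoms G) (ks1 ++ ks2)).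
  assert (Hg : forall k, In k (kids t) -> good G k)
    by (intros k Hk; simpl in Hk; apply in_app_or in Hk; destruct Hk; auto).
  assert (Hw : wf t).
  { constructor.
    - intros b c Hk; exact (proj1 (Hg _ Hk)).
    - intros b c p Hk Hp. simpl in Hp. apply in_atoms in Hp. destruct (Hg _ Hk) as [_ [HF _]].
      exact (HF _ Hp). }
  assert (Hk1 : forall k, In k ks1 -> In k (kids t)) by (intros; simpl; apply in_or_app; auto).
  assert (Himp : forall x y, In (Imp x y) G -> (frc t x -> frc t y) -> frc t (Imp x y)).
  { intros x y Hin Ht u Hu Hx. inversion Hu; subst.
    - auto.
    - destruct (Hg _ H) as [_ [HF _]]. apply (HF _ Hin); auto. }
  exists t; split; [exact Hw|split].
  - intros A HA. generalize (Hirr A HA); destruct A as [p| |a b|a b|a b|a]; simpl; intro Hi.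
    + apply in_atoms; auto.
    + destruct Hi.
    + destruct Hi.
    + destruct Hi.
    + destruct a as [p| |a1 a2|a1 a2|a1 a2|a1]; simpl in Hi.
      * apply Himp; auto. intros Hp. simpl in Hp. apply in_atoms in Hp. contradiction.
      * apply Himp; auto. intros [].
      * destruct Hi.
      * destruct Hi.
      * apply Himp; auto. intros H.
        destruct Hi as [rest [Hp N]].
        destruct (IH (a1 :: Imp a2 b :: rest) a2) as [m [Hwm [Hf Hn]]]; auto.
        { rewrite <- Hmu. unfold mu. rewrite (sw_perm _ _ Hp). meas. }
        destruct (Hc1 (Imp (Imp a1 a2) b) HA) as [[bk m'] [Hin [Hbk [Hm1 Hm2]]]].
        { exists (false, m). split; [|simpl; split; [reflexivity|split; [apply Hf; left; reflexivity|exact Hn]]]. split; [auto|split; [|discriminate]].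
          simpl. eapply forces_perm; [apply Permutation_sym; exact Hp|].
          apply forces_cons in Hf; destruct Hf as [Ha1 Hf].
          apply forces_cons in Hf; destruct Hf as [Hab Hf].
          apply forces_cons; split; auto.
          simpl; intros u Hu Hu'. apply (Hab u Hu). apply Hu'; [apply tle_refl|].
          eapply persist; eauto. }
        simpl in *. subst bk. exfalso; apply Hm2. apply (H m'); auto.
        eapply le_step; [apply Hk1; exact Hin| apply tle_refl].
      * apply Himp; auto. intros H.
        destruct Hi as [Phi [G0 [Hnb [Hp N]]]].
        destruct (IH (b :: Box a1 :: Phi ++ G0) a1) as [m [Hwm [Hf Hn]]]; auto.
        { rewrite <- Hmu. unfold mu. rewrite (sw_perm _ _ Hp). meas. }
        destruct (Hc1 (Imp (Box a1) b) HA) as [[bk m'] [Hin [Hbk Hm1]]].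
        { exists (true, m). split; [|simpl; split; [reflexivity|exact Hn]].
          apply forces_cons in Hf; destruct Hf as [Hb Hf].
          apply forces_cons in Hf; destruct Hf as [_ Hf].
          apply forces_app in Hf; destruct Hf as [Hf1 Hf2].
          destruct (box_child Phi G0 m Hnb Hwm Hf1 Hf2) as [Hc1' Hc2'].
          split; [auto|split].
          - simpl. eapply forces_perm; [apply Permutation_sym; exact Hp|].
            apply forces_cons; split; auto.
            simpl; intros u Hu _. eapply persist; eauto.
          - simpl; intros _ x Hx. apply Hc2'.
            eapply Permutation_in in Hx; [|exact Hp]. destruct Hx as [Hx|Hx]; [discriminate|exact Hx]. }
        simpl in *. subst bk. exfalso; apply Hm1. apply (H m').
        eapply R_edge; [apply Hk1; exact Hin| apply tle_refl].
    + intros u Hu. inversion Hu; subst.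
      * destruct (Hg _ H) as [Hwc [_ Hb]]. eapply persist; [exact Hwc| eauto| apply Hb; auto].
      * destruct (Hg _ H) as [_ [HF _]]. apply (HF _ HA); auto.
  - apply Href.
    + intros p Hp; apply in_atoms; auto.
    + intros k Hk; simpl; apply in_or_app; auto.
Qed.

Lemma complete : forall n G d, mu G d = n -> ~ G4iSLt G d -> CM G d.
Proof.
  intro n; induction n as [n IHn'] using (well_founded_induction lt_wf).
  intros G d Hmu Hd.
  assert (IH : IHn n) by (intros G' d' Hlt Hd'; eapply IHn'; eauto).
  assert (IH' : forall G' d', ~ G4iSLt G' d' -> mu G' d' < n -> CM G' d') by (intros; apply IH; auto).
  destruct (classic (forall A, In A G -> irr G A)) as [Hirr|Hn].
  { eapply irr_case; eauto. }
  apply not_all_ex_not in Hn. destruct Hn as [A HA]. apply imply_to_and in HA.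
  destruct HA as [HA Hni].
  destruct (in_split _ _ HA) as [l1 [l2 HG]].
  assert (Hp : Permutation G (A :: l1 ++ l2)) by (rewrite HG; apply Permutation_sym, Permutation_middle).
  clear HG. remember (l1 ++ l2) as rest eqn:Hrest. clear l1 l2 Hrest.
  assert (Back : forall t, forces t (A :: rest) -> forces t G)
    by (intros t Ht; eapply forces_perm; [apply Permutation_sym; exact Hp| exact Ht]).
  destruct A as [p| |a b|a b|a b|a]; simpl in Hni.
  - exfalso; auto.
  - exfalso; apply Hd; eapply BotL; exact Hp.
  - assert (N : ~ G4iSLt (a :: b :: rest) d) by (intro D; apply Hd; eapply AndL; eauto).
    destruct (IH' _ _ N ltac:(rewrite <- Hmu; unfold mu; rewrite (sw_perm _ _ Hp); meas))
      as [t [Hw [Hf Hnd]]].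
    exists t; split; auto; split; auto. apply Back.
    apply forces_cons in Hf; destruct Hf as [Ha Hf]. apply forces_cons in Hf; destruct Hf as [Hb Hf].
    apply forces_cons; split; [split|]; auto.
  - destruct (classic (G4iSLt (a :: rest) d)) as [D1|N1].
    + assert (N : ~ G4iSLt (b :: rest) d) by (intro D; apply Hd; eapply OrL; eauto).
      destruct (IH' _ _ N ltac:(rewrite <- Hmu; unfold mu; rewrite (sw_perm _ _ Hp); meas))
        as [t [Hw [Hf Hnd]]].
      exists t; split; auto; split; auto. apply Back.
      apply forces_cons in Hf; destruct Hf as [Hb Hf]. apply forces_cons; split; [right|]; auto.
    + destruct (IH' _ _ N1 ltac:(rewrite <- Hmu; unfold mu; rewrite (sw_perm _ _ Hp); meas))
        as [t [Hw [Hf Hnd]]].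
      exists t; split; auto; split; auto. apply Back.
      apply forces_cons in Hf; destruct Hf as [Hb Hf]. apply forces_cons; split; [left|]; auto.
  - destruct a as [p| |a1 a2|a1 a2|a1 a2|a1]; simpl in Hni.
    + apply NNPP in Hni.
      assert (Hr : In (Var p) rest).
      { eapply Permutation_in in Hni; [|exact Hp]. destruct Hni as [Hx|Hx]; [discriminate|exact Hx]. }
      destruct (in_split _ _ Hr) as [l3 [l4 ->]].
      assert (Hp2 : Permutation G (Var p :: Imp (Var p) b :: l3 ++ l4)).
      { eapply Permutation_trans; [exact Hp|]. eapply Permutation_trans; [|apply perm_swap].
        apply perm_skip. apply Permutation_sym, Permutation_middle. }
      assert (N : ~ G4iSLt (Var p :: b :: l3 ++ l4) d) by (intro D; apply Hd; eapply PImpL; eauto).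
      destruct (IH' _ _ N ltac:(rewrite <- Hmu; unfold mu; rewrite (sw_perm _ _ Hp2); meas))
        as [t [Hw [Hf Hnd]]].
      exists t; split; auto; split; auto.
      eapply forces_perm; [apply Permutation_sym; exact Hp2|].
      apply forces_cons in Hf; destruct Hf as [Hv Hf]. apply forces_cons in Hf; destruct Hf as [Hb Hf].
      apply forces_cons; split; auto. apply forces_cons; split; auto.
      simpl; intros u Hu _. eapply persist; eauto.
    + exfalso; auto.
    + assert (N : ~ G4iSLt (Imp a1 (Imp a2 b) :: rest) d) by (intro D; apply Hd; eapply AndImpL; eauto).
      destruct (IH' _ _ N ltac:(rewrite <- Hmu; unfold mu; rewrite (sw_perm _ _ Hp); meas))
        as [t [Hw [Hf Hnd]]].
      exists t; split; auto; split; auto. apply Back.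
      apply forces_cons in Hf; destruct Hf as [Hi Hf]. apply forces_cons; split; auto.
      simpl; intros u Hu [H1 H2]. apply (Hi u Hu H1 u (tle_refl u) H2).
    + assert (N : ~ G4iSLt (Imp a1 b :: Imp a2 b :: rest) d) by (intro D; apply Hd; eapply OrImpL; eauto).
      destruct (IH' _ _ N ltac:(rewrite <- Hmu; unfold mu; rewrite (sw_perm _ _ Hp); meas))
        as [t [Hw [Hf Hnd]]].
      exists t; split; auto; split; auto. apply Back.
      apply forces_cons in Hf; destruct Hf as [Hi1 Hf]. apply forces_cons in Hf; destruct Hf as [Hi2 Hf].
      apply forces_cons; split; auto.
      simpl; intros u Hu [H1|H2]; [apply Hi1|apply Hi2]; auto.
    + assert (D1 : G4iSLt (a1 :: Imp a2 b :: rest) a2).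
      { apply NNPP; intro N; apply Hni; exists rest; split; auto. }
      assert (N : ~ G4iSLt (b :: rest) d) by (intro D; apply Hd; eapply ImpImpL; [exact Hp| apply ImpR; exact D1| exact D]).
      destruct (IH' _ _ N ltac:(rewrite <- Hmu; unfold mu; rewrite (sw_perm _ _ Hp); meas))
        as [t [Hw [Hf Hnd]]].
      exists t; split; auto; split; auto. apply Back.
      apply forces_cons in Hf; destruct Hf as [Hb Hf]. apply forces_cons; split; auto.
      simpl; intros u Hu _. eapply persist; eauto.
    + destruct (decomp rest) as [Phi [G0 [Hnb Hp0]]].
      assert (Hp2 : Permutation G (Imp (Box a1) b :: Phi ++ map Box G0))
        by (eapply Permutation_trans; [exact Hp| apply perm_skip; exact Hp0]).
      assert (D1 : G4iSLt (b :: Box a1 :: Phi ++ G0) a1).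
      { apply NNPP; intro N; apply Hni; exists Phi, G0; split; auto. }
      assert (N : ~ G4iSLt (b :: Phi ++ map Box G0) d) by (intro D; apply Hd; eapply BoxImpL; eauto).
      destruct (IH' _ _ N ltac:(rewrite <- Hmu; unfold mu; rewrite (sw_perm _ _ Hp2); meas))
        as [t [Hw [Hf Hnd]]].
      exists t; split; auto; split; auto.
      eapply forces_perm; [apply Permutation_sym; exact Hp2|].
      apply forces_cons in Hf; destruct Hf as [Hb Hf]. apply forces_cons; split; auto.
      simpl; intros u Hu _. eapply persist; eauto.
  - exfalso; auto.
Qed.

Theorem theorem2 (Gamma : list form) (phi chi : form) :
  G4iSLt Gamma phi -> G4iSLt (phi :: Gamma) chi -> G4iSLt Gamma chi.
Proof.
  intros D1 D2. apply NNPP; intro Hn.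
  destruct (complete _ Gamma chi eq_refl Hn) as [t [Hw [Hf Hc]]].
  apply Hc. eapply sound; [exact D2|exact Hw|]. apply forces_cons; split; auto.
  eapply sound; eauto.
Qed.
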